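(* Let $(G,k)$ be an instance of PITVD and let $P=(v_1,v_2,\dots,v_\ell)$ be a degree-2-tail in $G$ with $\ell\ge3$ vertices, and let $Z=\{v_3,v_4,\dots,v_\ell\}$. Then $(G,k)$ is a yes-instance of PITVD if and only if $(G-Z,k)$ is a yes-instance of PITVD.
   Context: PITVD: the input is an undirected multigraph $G$ (no self-loops) and an integer $k$; the question is whether there exists $X\subseteq V(G)$ with $|X|\le k$ such that $G-X$ is a simple graph and every connected component of $G-X$ is a proper interval graph or a tree. A path $(v_1,\dots,v_\ell)$ (distinct vertices, consecutive ones adjacent) is a degree-2-path if every internal vertex has degree exactly $2$ in $G$; it is a degree-2-tail if moreover $d_G(v_1)>2$ and $d_G(v_\ell)=1$. *)

(* Defs.v *)
From Stdlib Require Import Reals.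
From mathcomp Require Import all_boot.
Set Implicit Arguments. Unset Strict Implicit. Unset Printing Implicit Defensive.

(* An undirected multigraph without self-loops on a finite vertex type V:
   mult u v = number of parallel edges between u and v. *)
Record multigraph (V : finType) := Multigraph {
  mult : V -> V -> nat;
  mult_sym : forall u v, mult u v = mult v u;
  mult_loopless : forall v, mult v v = 0
}.

Section Defs.
Variable V : finType.
Implicit Type G : multigraph V.

Definition deg G (v : V) : nat := \sum_(u : V) mult G v u.

Definition adj_in G (S : {set V}) : rel V :=
  fun u v => [&& u \in S, v \in S & 0 < mult G u v].

Definition simple_in G (S : {set V}) : Prop :=
  forall u v, u \in S -> v \in S -> mult G u v <= 1.

Definition component G (S : {set V}) (x : V) : {set V} :=
  [set y | connect (adj_in G S) x y].

(* the graph (C, e) is a proper interval graph: it has an interval model on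
   the real line with closed intervals [l v, r v] such that no interval
   properly contains another *)
Definition proper_interval (C : {set V}) (e : rel V) : Prop :=
  exists l r : V -> R,
    (forall v, v \in C -> Rle (l v) (r v)) /\
    (forall u v, u \in C -> v \in C -> u != v ->
       (e u v <-> (Rle (l u) (r v) /\ Rle (l v) (r u)))) /\
    (forall u v, u \in C -> v \in C ->
       ~ (Rle (l v) (l u) /\ Rle (r u) (r v) /\ (Rlt (l v) (l u) \/ Rlt (r u) (r v)))).

(* the connected graph (C, e) is a tree: it contains no cycle *)
Definition acyclic_on (C : {set V}) (e : rel V) : Prop :=
  ~ exists c : seq V, [/\ all (fun x => x \in C) c, uniq c, 3 <= size c & cycle e c].

Definition good_in G (S : {set V}) : Prop :=
  simple_in G S /\
  forall x, x \in S ->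
    proper_interval (component G S x) (adj_in G S) \/
    acyclic_on (component G S x) (adj_in G S).

Definition pitvd_yes G (S : {set V}) (k : nat) : Prop :=
  exists X : {set V}, [/\ X \subset S, #|X| <= k & good_in G (S :\: X)].

Definition deg2_tail G (p : seq V) : Prop :=
  exists v1 vl (mid : seq V),
    p = v1 :: rcons mid vl /\
    uniq p /\
    path (fun u v => 0 < mult G u v) v1 (rcons mid vl) /\
    all (fun v => deg G v == 2) mid /\
    2 < deg G v1 /\ deg G vl = 1.
End Defs.

(* Main.v *)
From Stdlib Require Import Reals Lra.
Require Import Defs.
From mathcomp Require Import all_boot.
From mathcomp Require Import zify.
Set Implicit Arguments. Unset Strict Implicit.

Section Gen.
Variable V : finType.

Lemma conn_ind (e : rel V) (x : V) (P : V -> Prop) :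
  P x -> (forall u w, connect e x u -> P u -> e u w -> P w) ->
  forall y, connect e x y -> P y.
Proof.
move=> Px step y /connectP [q pq ->].
suff: forall u, connect e x u -> P u -> path e u q -> P (last u q).
  by apply; rewrite ?connect0.
elim: q {pq} => [|w q IH] u cu Pu //= /andP [euw pw].
apply: IH => //; last exact: step euw.
by apply: connect_trans cu (connect1 euw).
Qed.

Lemma two_nbrs (e : rel V) (c : seq V) x :
  cycle e c -> uniq c -> 3 <= size c -> x \in c ->
  exists y w, [/\ y \in c, w \in c, y != w, e x y & e w x].
Proof.
move=> cyc uc sc xc.
case: (rot_to xc) => i s' Hrot.
have cyc' : cycle e (x :: s') by rewrite -Hrot rot_cycle.
have uc' : uniq (x :: s') by rewrite -Hrot rot_uniq.
have sc' : 3 <= size (x :: s') by rewrite -Hrot size_rot.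
have mem' : forall z, z \in x :: s' -> z \in c by move=> z; rewrite -Hrot mem_rot.
clear Hrot; case: s' cyc' uc' sc' mem' => [|y [|z t]] //= cyc' uc' sc' mem'.
exists y, (last z t).
move: cyc'; rewrite /= rcons_path /= => /and4P [exy _ _ elx].
split.
- by apply: mem'; rewrite !inE eqxx orbT.
- by apply: mem'; have := mem_last z t; rewrite !inE => ->; rewrite !orbT.
- move: uc' => /and4P [_ yn _ _].
  apply/eqP => eyl; move: yn; rewrite eyl.
  by have := mem_last z t; rewrite inE => ->.
- exact: exy.
- exact: elx.
Qed.
End Gen.

Section Gen2.
Variable V : finType.
Implicit Type G : multigraph V.

Lemma adj_sym G S : symmetric (adj_in G S).
Proof. by move=> u v; rewrite /adj_in mult_sym andbCA. Qed.

Lemma adj_mono G (A S : {set V}) : A \subset S -> subrel (adj_in G A) (adj_in G S).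
Proof.
move=> /subsetP AS u v /and3P [uA vA m]; by rewrite /adj_in AS ?AS.
Qed.

Lemma adj_eq G (A S : {set V}) u v : A \subset S -> u \in A -> v \in A ->
  adj_in G A u v = adj_in G S u v.
Proof. by move=> /subsetP AS uA vA; rewrite /adj_in uA vA !AS. Qed.

Lemma pi_restrict (C C' : {set V}) (e e' : rel V) :
  C' \subset C -> (forall u v, u \in C' -> v \in C' -> e' u v = e u v) ->
  proper_interval C e -> proper_interval C' e'.
Proof.
move=> /subsetP sC ee [l [r [H1 [H2 H3]]]]; exists l, r; split; [|split].
- by move=> v /sC; apply: H1.
- by move=> u v uC vC uv; rewrite ee //; apply: H2 => //; apply: sC.
- by move=> u v uC vC; apply: H3; apply: sC.
Qed.

Lemma ac_restrict (C C' : {set V}) (e e' : rel V) :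
  C' \subset C -> (forall u v, u \in C' -> v \in C' -> e' u v -> e u v) ->
  acyclic_on C e -> acyclic_on C' e'.
Proof.
move=> /subsetP sC ee Hac [c [ac uc sc cc]]; apply: Hac; exists c; split=> //.
- by apply/allP => x /(allP ac) /sC.
- by apply: (sub_in_cycle (P := mem C')) cc => // u v; apply: ee.
Qed.

Lemma comp_mono G (A S : {set V}) x : A \subset S -> component G A x \subset component G S x.
Proof.
move=> AS; apply/subsetP => y; rewrite !inE; apply: connect_sub => u v h.
by apply: connect1; apply: adj_mono h.
Qed.

Lemma comp_in G (S : {set V}) x y : x \in S -> y \in component G S x -> y \in S.
Proof.
move=> xS; rewrite inE; move: y; apply: conn_ind => // u w _ _ /and3P [_ -> _].
by []. Qed.

Lemma hered G (S A : {set V}) : good_in G S -> A \subset S -> good_in G A.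
Proof.
move=> [sS cS] AS; have AS' := subsetP AS; split.
- by move=> u v uA vA; apply: sS; apply: AS'.
- move=> x xA; have sub := comp_mono G x AS.
  have inA : forall u, u \in component G A x -> u \in A by move=> u; apply: comp_in.
  case: (cS x (AS' x xA)) => H; [left|right].
  + apply: pi_restrict sub _ H => u v uC vC; apply: adj_eq => //; exact: inA.
  + by apply: ac_restrict sub _ H => u v _ _; apply: adj_mono.
Qed.
End Gen2.

Section Tail.
Variable V : finType.

Lemma sum2 (f : V -> nat) a y : y != a -> f a + f y <= \sum_u f u.
Proof.
move=> ya; rewrite (bigD1 a) //= (bigD1 y) /=; last by rewrite ya.
by rewrite addnA leq_addr.
Qed.

Lemma sum3 (f : V -> nat) a b y : b != a -> y != a -> y != b ->
  f a + f b + f y <= \sum_u f u.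
Proof.
move=> ba ya yb; rewrite (bigD1 a) //= (bigD1 b) /=; last by rewrite ba.
rewrite (bigD1 y) /=; last by rewrite ya yb.
by rewrite !addnA leq_addr.
Qed.

Lemma tail_facts (G : multigraph V) p x0 : deg2_tail G p -> 3 <= size p ->
  [/\ uniq p,
      forall i, i.+1 < size p -> 0 < mult G (nth x0 p i) (nth x0 p i.+1),
      forall i y, 0 < i < size p -> 0 < mult G (nth x0 p i) y ->
         y = nth x0 p i.-1 \/ (i.+1 < size p /\ y = nth x0 p i.+1)
    & forall i y, 0 < i < size p -> mult G (nth x0 p i) y <= 1].
Proof.
move=> [v1 [vl [mid [-> [up [pp [amid [d1 dl]]]]]]]] _.
have He : forall i, i.+1 < size (v1 :: rcons mid vl) ->
    0 < mult G (nth x0 (v1 :: rcons mid vl) i) (nth x0 (v1 :: rcons mid vl) i.+1).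
  by move=> i hi; move/(pathP x0): pp; apply.
set q := v1 :: rcons mid vl in He up *.
have sq : size q = (size mid).+2 by rewrite /= size_rcons.
have Hdeg : forall i, 0 < i < size q ->
    deg G (nth x0 q i) = if i.+1 < size q then 2 else 1.
  move=> [|i] //= hi; move: hi; rewrite size_rcons => hi.
  rewrite nth_rcons; case: (ltngtP i (size mid)) => h.
  - by move/all_nthP: amid => /(_ x0 i h) /eqP ->; rewrite ifT //; lia.
  - lia.
  - by rewrite dl ifF //; lia.
have Hprev : forall i, 0 < i < size q -> 0 < mult G (nth x0 q i) (nth x0 q i.-1).
  move=> [|i] //= hi; rewrite mult_sym; have := He i; apply; done.
have Hneq : forall i j, i < size q -> j < size q -> i != j -> nth x0 q i != nth x0 q j.
  by move=> i j hi hj; rewrite nth_uniq.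
have key : forall i y, 0 < i < size q ->
   (y = nth x0 q i.-1 \/ (i.+1 < size q /\ y = nth x0 q i.+1)) \/ mult G (nth x0 q i) y = 0.
  move=> i y hi; have d := Hdeg i hi; have p1 := Hprev i hi.
  case: (boolP (y == nth x0 q i.-1)) => [/eqP|] ya; first by left; left.
  case: ifP d => hs d.
  - have p2 := He i hs.
    case: (boolP (y == nth x0 q i.+1)) => [/eqP|] yb; first by left; right.
    have ba : nth x0 q i.+1 != nth x0 q i.-1 by apply: Hneq; lia.
    have := sum3 (mult G (nth x0 q i)) ba ya yb; rewrite -/(deg G _) d => h.
    by right; lia.
  - have := sum2 (mult G (nth x0 q i)) ya; rewrite -/(deg G _) d => h.
    by right; lia.
split=> //.
- move=> i y hi hy; case: (key i y hi) => //; lia.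
- move=> i y hi; have d := Hdeg i hi; have p1 := Hprev i hi.
  case: (key i y hi) => [[->|[hs ->]]|->] //.
  + case: ifP d => hs d.
    * have p2 := He i hs.
      have ba : nth x0 q i.+1 != nth x0 q i.-1 by apply: Hneq; lia.
      have := sum2 (mult G (nth x0 q i)) ba; rewrite -/(deg G _) d => h; lia.
    * have : mult G (nth x0 q i) (nth x0 q i.-1) <= deg G (nth x0 q i).
        by rewrite /deg (bigD1 (nth x0 q i.-1)) //= leq_addr.
      rewrite d; lia.
  + rewrite hs in d.
    have p2 := He i hs.
    have ba : nth x0 q i.+1 != nth x0 q i.-1 by apply: Hneq; lia.
    have := sum2 (mult G (nth x0 q i)) ba; rewrite -/(deg G _) d => h; lia.
Qed.
End Tail.

Section Main.
Variables (V : finType) (G : multigraph V) (p : seq V) (x0 : V).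
Hypothesis Hu : uniq p.
Hypothesis Hn : 3 <= size p.
Hypothesis He : forall i, i.+1 < size p -> 0 < mult G (nth x0 p i) (nth x0 p i.+1).
Hypothesis Hnb : forall i y, 0 < i < size p -> 0 < mult G (nth x0 p i) y ->
         y = nth x0 p i.-1 \/ (i.+1 < size p /\ y = nth x0 p i.+1).
Hypothesis Hle1 : forall i y, 0 < i < size p -> mult G (nth x0 p i) y <= 1.

Lemma s12 : 1 < size p. Proof. by apply: ltn_trans Hn. Qed.
Lemma s01 : 0 < 1 < size p. Proof. exact: s12. Qed.
Lemma s0 : 0 < size p. Proof. by apply: ltn_trans s12. Qed.
Ltac sz := first [exact: s01 | exact: s12 | exact: Hn | exact: s0].

Let Z := [set x in drop 2 p].

Lemma Zi i : i < size p -> (nth x0 p i \in Z) = (1 < i).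
Proof.
move=> hi; rewrite inE; case: ltnP => h.
- have -> : nth x0 p i = nth x0 (drop 2 p) (i - 2) by rewrite nth_drop; congr nth; lia.
  apply: mem_nth; rewrite size_drop. move: h hi; set m := size p. lia.
- apply/negP => hd.
  have ht : nth x0 p i \in take 2 p.
    rewrite -(nth_take x0 (n0:=2)) ?mem_nth // size_take ifT; [|move: Hn; set m := size p]; lia.
  move: Hu; rewrite -(cat_take_drop 2 p) cat_uniq => /and3P [_ /hasPn hh _].
  by move: (hh _ hd); rewrite ht.
Qed.

Lemma Zidx y : y \in Z -> [/\ y = nth x0 p (index y p), 1 < index y p & index y p < size p].
Proof.
move=> yz; have yp : y \in p by move: yz; rewrite inE => /mem_drop.
have hi : index y p < size p by rewrite index_mem.
split=> //; first by rewrite nth_index.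
by rewrite -(Zi hi) nth_index.
Qed.

Lemma cyc_avoid (e : rel V) : (forall u v, e u v -> 0 < mult G u v) ->
  forall c, cycle e c -> uniq c -> 3 <= size c ->
  forall i, 0 < i < size p -> nth x0 p i \notin c.
Proof.
move=> eP c cyc uc sc.
have step : forall i, 0 < i < size p -> nth x0 p i \in c ->
    i.+1 < size p /\ nth x0 p i.+1 \in c.
  move=> i hi ic.
  have [y [w [yc wc yw exy ewx]]] := two_nbrs cyc uc sc ic.
  have my := eP _ _ exy; have mw := eP _ _ ewx; rewrite mult_sym in mw.
  case: (Hnb hi my) => [ey|[h ey]]; last by rewrite -ey.
  case: (Hnb hi mw) => [ew|[h ew]]; last by rewrite -ew.
  by move: yw; rewrite ey ew eqxx.
move=> i hi; apply/negP => ic.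
have: forall k, i + k < size p /\ nth x0 p (i + k) \in c.
  elim=> [|k [hk kc]]; first by rewrite addn0; split=> //; case/andP: hi.
  rewrite addnS; apply: step => //; move: hi hk; set m := size p; lia.
by move=> /(_ (size p)) [h _]; move: h; set m := size p; lia.
Qed.

Lemma boundary y w : y \in Z -> w \notin Z -> 0 < mult G y w -> w = nth x0 p 1.
Proof.
move=> /Zidx [ey h1 h2] wz m; rewrite ey in m.
case: (Hnb _ m) => [|ew|[h ew]]; first lia.
- have: index y p = 2 \/ 2 < index y p by lia.
  case=> h; first by rewrite ew h.
  by move: wz; rewrite ew Zi; [lia|lia].
- by move: wz; rewrite ew Zi; [lia|lia].
Qed.

Lemma B2 y : y \in Z -> 0 < mult G (nth x0 p 1) y -> y = nth x0 p 2.
Proof.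
move=> yz m; case: (Hnb _ m) => [|ey|[h ey]] //; first lia.
by move: yz; rewrite ey Zi; lia.
Qed.

Lemma ZZ y w : y \in Z -> w \in Z ->
  (0 < mult G y w) <-> (index w p = (index y p).+1 \/ index y p = (index w p).+1).
Proof.
move=> /Zidx [ey y1 y2] /Zidx [ew w1 w2]; split.
- rewrite {1}ey => m; case: (Hnb _ m) => [|e1|[h e1]].
  + move: y1 y2; set j := index y p; set m' := size p; lia.
  + right; rewrite {1}e1 index_uniq //; move: y1 y2; set j := index y p; set m' := size p; lia.
  + by left; rewrite {1}e1 index_uniq.
- case=> h.
  + by rewrite ey {1}ew h; apply: He; move: w2; rewrite h.
  + by rewrite mult_sym ew {1}ey h; apply: He; move: y2; rewrite h.
Qed.


Variable X : {set V}.
Hypothesis XZ : X \subset ~: Z.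
Hypothesis goodS : good_in G (~: Z :\: X).
Let S := ~: Z :\: X.
Let T := [set: V] :\: X.
Let v1 := nth x0 p 0.
Let v2 := nth x0 p 1.

Lemma inS u : (u \in S) = (u \notin Z) && (u \notin X).
Proof. by rewrite !inE andbC. Qed.
Lemma inT u : (u \in T) = (u \notin X).
Proof. by rewrite !inE andbT. Qed.
Lemma ZT z : z \in Z -> z \in T.
Proof.
move=> zZ; rewrite inT; apply/negP => /(subsetP XZ); by rewrite inE zZ.
Qed.
Lemma ST : S \subset T.
Proof. by apply/subsetP => u; rewrite inS inT => /andP []. Qed.
Lemma v1Z : v1 \notin Z.
Proof. rewrite /v1 Zi //; sz. Qed.
Lemma v2Z : v2 \notin Z.
Proof. rewrite /v2 Zi //; sz. Qed.

Lemma simpleT : simple_in G T.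
Proof.
move=> u v uT vT; case: (boolP (u \in Z)) => uZ.
  have [eu u1 u2] := Zidx uZ; rewrite eu; apply: Hle1.
  by move: u1 u2; set j := index u p; set m := size p; lia.
case: (boolP (v \in Z)) => vZ.
  have [ev v1' v2'] := Zidx vZ; rewrite mult_sym ev; apply: Hle1.
  by move: v1' v2'; set j := index v p; set m := size p; lia.
by apply: goodS.1; rewrite inS ?uZ ?vZ -inT.
Qed.

Let f u := if u \in Z then v2 else u.

Lemma retract x y : connect (adj_in G T) x y -> connect (adj_in G S) (f x) (f y).
Proof.
move: y; apply: conn_ind; first exact: connect0.
move=> u w _ cu auw; apply: (connect_trans cu).
move: auw => /and3P [uT wT m]; rewrite /f.
case: (boolP (u \in Z)) => uZ; case: (boolP (w \in Z)) => wZ.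
- exact: connect0.
- by rewrite (boundary uZ wZ m) connect0.
- by rewrite mult_sym in m; rewrite (boundary wZ uZ m) connect0.
- apply: connect1; rewrite /adj_in m !inS uZ wZ -!inT uT wT //.
Qed.

Let C := component G S v2.

Lemma idx_iff (i j : nat) (a : R) : i <> j ->
  ((Rle (a + 1 - INR i) (a + 2 - INR j)) /\ (Rle (a + 1 - INR j) (a + 2 - INR i))) <->
  (j = i.+1 \/ i = j.+1).
Proof.
move=> ij; split.
- move=> [h1 h2].
  have h3 : (Rlt (INR j) (INR (i + 2))) by rewrite plus_INR /=; lra.
  have h4 : (Rlt (INR i) (INR (j + 2))) by rewrite plus_INR /=; lra.
  move/INR_lt: h3; move/INR_lt: h4; lia.
- case=> ->; rewrite S_INR; lra.
Qed.

Lemma Zreal z : z \in Z -> (Rle (2) (INR (index z p))) /\ (Rle (INR (index z p) + 1) (INR (size p))).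
Proof.
move=> /Zidx [_ h1 h2]; split.
- have : (2 <= index z p)%coq_nat by move: h1; set j := index z p; lia.
  by move/le_INR => /=; lra.
- rewrite -S_INR; apply: le_INR; move: h2; set j := index z p; set m := size p; lia.
Qed.

Lemma pi_ext (l r : V -> R) : v1 \in S -> v2 \in S ->
  (forall v, v \in C -> (Rle (l v) (r v))) ->
  (forall u v, u \in C -> v \in C -> u != v ->
       (adj_in G S u v <-> ((Rle (l u) (r v)) /\ (Rle (l v) (r u))))) ->
  (forall u v, u \in C -> v \in C ->
       ~ ((Rle (l v) (l u)) /\ (Rle (r u) (r v)) /\ ((Rlt (l v) (l u)) \/ (Rlt (r u) (r v))))) ->
  (Rlt (l v2) (l v1)) ->
  proper_interval (C :|: Z) (adj_in G T).
Proof.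
move=> v1S v2S H1 H2 H3 hl.
have v2C : v2 \in C by rewrite inE connect0.
have CS : forall v, v \in C -> v \in S by move=> v; apply: comp_in.
have a12 : adj_in G S v1 v2.
  by rewrite /adj_in v1S v2S /=; apply: He; sz.
have v1C : v1 \in C.
  by rewrite inE; apply: connect1; rewrite adj_sym.
have v12 : v1 != v2 by rewrite /v1 /v2 nth_uniq //; sz.
set a := l v2. set N := INR (size p).
have ea : l v2 = a by []. have eN : INR (size p) = N by []. clearbody a N.
pose phi t := if Rlt_dec t a then (Rminus (Rminus t N) 1) else t.
have Npos : (Rle (0) (N)) by rewrite -eN; apply: pos_INR.
have phile : forall s t, (Rle (phi s) (phi t)) <-> (Rle (s) (t)).
  by move=> s t; rewrite /phi; case: (Rlt_dec s a); case: (Rlt_dec t a) => * /=; split => *; lra.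
have philt : forall s t, (Rlt (phi s) (phi t)) <-> (Rlt (s) (t)).
  by move=> s t; rewrite /phi; case: (Rlt_dec s a); case: (Rlt_dec t a) => * /=; split => *; lra.
have phia : phi a = a by rewrite /phi; case: Rlt_dec => /= *; lra.
have ar : (Rlt (a) (r v2)).
  have := (H2 _ _ v1C v2C v12).1 a12; lra.
have phir2 : phi (r v2) = r v2 by rewrite /phi; case: Rlt_dec => /= *; lra.
have far : forall v, v \in C -> v != v2 -> (Rlt (phi (r v)) (a - N)) \/ (Rlt (a) (phi (l v))).
  move=> v vC vv2.
  case: (Rlt_le_dec (r v) a) => h.
    by left; rewrite /phi; case: Rlt_dec => /= *; lra.
  case: (Rlt_le_dec a (l v)) => h'.
    by right; rewrite /phi; case: Rlt_dec => /= *; lra.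
  exfalso.
  have : adj_in G S v v2 by apply/(H2 _ _ vC v2C vv2); have := H1 _ v2C; split; lra.
  move=> /and3P [_ _ m]; rewrite mult_sym in m.
  case: (Hnb _ m) => [|ev|[_ ev]] /=.
  - sz.
  - by move: h' hl; rewrite ev -/v1; lra.
  - by move: (CS _ vC); rewrite inS ev Zi /=; [|sz].
pose l' v := if v \in Z then (Rminus (Rplus a 1) (INR (index v p))) else phi (l v).
pose r' v := if v \in Z then (Rminus (Rplus a 2) (INR (index v p))) else phi (r v).
have vZ : forall v, v \in C -> v \notin Z by move=> v /CS; rewrite inS => /andP [].
have mixed : forall z v, z \in Z -> v \in C ->
   [/\ (adj_in G T z v <-> ((Rle (l' z) (r' v)) /\ (Rle (l' v) (r' z)))),
     ~ ((Rle (l' v) (l' z)) /\ (Rle (r' z) (r' v)) /\ ((Rlt (l' v) (l' z)) \/ (Rlt (r' z) (r' v)))) &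
     ~ ((Rle (l' z) (l' v)) /\ (Rle (r' v) (r' z)) /\ ((Rlt (l' z) (l' v)) \/ (Rlt (r' v) (r' z))))].
  move=> z v zZ vC; have vZ' := vZ _ vC.
  rewrite /l' /r' zZ (negbTE vZ').
  have [i2 iN] := Zreal zZ.
  have adjE : adj_in G T z v = (0 < mult G z v).
    by rewrite /adj_in ZT //= (subsetP ST) // CS.
  rewrite adjE.
  have [ez ez1 ez2] := Zidx zZ.
  case: (eqVneq v v2) => [->|vv2].
  - rewrite ea phia phir2; split.
    + split.
      * rewrite mult_sym => m; have := B2 zZ m => e2.
        have : index z p = 2 by rewrite e2 index_uniq //; sz.
        by move=> ->; rewrite /=; lra.
      * move=> [_ h].
        have : INR (index z p) = INR 2 by rewrite /=; lra.
        move/INR_eq => e2; rewrite ez e2 mult_sym; apply: He.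
        by sz.
    + lra.
    + lra.
  - have ff : ~~ (0 < mult G z v).
      by apply/negP => m; move: vv2; rewrite (boundary zZ vZ' m) eqxx.
    rewrite (negbTE ff).
    have := far _ vC vv2; have := H1 _ vC; rewrite -phile => hh hf.
    split.
    + split => //; lra.
    + lra.
    + lra.
exists l', r'; split; [|split].
- move=> v; rewrite in_setU; case: (boolP (v \in Z)) => vz /=.
  + by rewrite /l' /r' vz; lra.
  + rewrite orbF => vC; rewrite /l' /r' (negbTE vz); apply/phile; exact: H1.
- move=> u v; rewrite !in_setU => uC vC uv.
  case: (boolP (u \in Z)) => uz; case: (boolP (v \in Z)) => vz.
  + have := ZZ uz vz; rewrite /adj_in ZT // ZT //= => ->.
    rewrite /l' /r' uz vz; symmetry; apply: idx_iff.
    have [eu _ _] := Zidx uz; have [ev _ _] := Zidx vz.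
    by move=> e; move: uv; rewrite eu ev e eqxx.
  + rewrite (negbTE vz) orbF in vC; by case: (mixed _ _ uz vC).
  + rewrite (negbTE uz) orbF in uC; case: (mixed _ _ vz uC) => h _ _.
    rewrite adj_sym h; tauto.
  + rewrite (negbTE uz) (negbTE vz) !orbF in uC vC.
    rewrite -(adj_eq G ST) ?CS //.
    rewrite /l' /r' (negbTE uz) (negbTE vz).
    have := H2 _ _ uC vC uv; have := phile (l u) (r v); have := phile (l v) (r u); tauto.
- move=> u v; rewrite !in_setU => uC vC.
  case: (boolP (u \in Z)) => uz; case: (boolP (v \in Z)) => vz.
  + rewrite /l' /r' uz vz; lra.
  + rewrite (negbTE vz) orbF in vC; by case: (mixed _ _ uz vC).
  + rewrite (negbTE uz) orbF in uC; by case: (mixed _ _ vz uC).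
  + rewrite (negbTE uz) (negbTE vz) !orbF in uC vC.
    rewrite /l' /r' (negbTE uz) (negbTE vz).
    have := H3 _ _ uC vC; have := phile (l v) (l u); have := phile (r u) (r v);
    have := philt (l v) (l u); have := philt (r u) (r v); tauto.
Qed.

Lemma goodT : good_in G T.
Proof.
have cS := sym_connect_sym (adj_sym G S).
split; first exact: simpleT.
move=> x xT.
case: (boolP [exists z in Z, connect (adj_in G T) x z]) => [/exists_inP [z zZ cxz] | /exists_inP nz].
-
  have cv2 : forall y, connect (adj_in G T) x y -> connect (adj_in G S) v2 (f y).
    move=> y cy; have h1 := retract cxz; have h2 := retract cy.
    rewrite /f zZ cS in h1; exact: connect_trans h1 h2.
  have cycZ : forall c, cycle (adj_in G T) c -> uniq c -> 3 <= size c ->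
      forall y, y \in c -> y \notin Z /\ y != v2.
    move=> c cc uc sc y yc.
    have eP : forall u v, adj_in G T u v -> 0 < mult G u v by move=> u v /and3P [].
    have ca := @cyc_avoid (adj_in G T) eP c cc uc sc.
    split.
    + apply/negP => yZ; have [ey y1 y2] := Zidx yZ.
      have hi : 0 < index y p < size p.
        by rewrite y2 andbT; apply: ltn_trans y1.
      by move: (ca _ hi); rewrite -ey yc.
    + apply/eqP => eyv.
      have hi : 0 < 1 < size p by sz.
      by move: (ca _ hi); rewrite -/v2 -eyv yc.
  have key : (forall y, connect (adj_in G S) v2 y -> y = v2) ->
      acyclic_on (component G T x) (adj_in G T).
    move=> triv [[|y c] [ac uc sc cc]] //.
    have yc : y \in y :: c by rewrite inE eqxx.
    have := allP ac y yc; rewrite inE => /cv2 /triv; rewrite /f.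
    have [h1 h2] := cycZ _ cc uc sc y yc.
    by rewrite (negbTE h1) => e; move: h2; rewrite e eqxx.
  case: (boolP (v2 \in S)) => v2S; last first.
    right; apply: key; apply: conn_ind => // u w _ -> /and3P [h _ _].
    by move: v2S; rewrite h.
  case: (boolP (v1 \in S)) => v1S; last first.
    right; apply: key; apply: conn_ind => // u w _ -> /and3P [_ wS m].
    case: (Hnb _ m) => [|ew|[_ ew]].
    + by sz.
    + by move: v1S wS; rewrite ew /= => /negbTE ->.
    + by move: wS; rewrite inS ew Zi //=; sz.
  have sub : component G T x \subset C :|: Z.
    apply/subsetP => y; rewrite inE => /cv2; rewrite /f in_setU.
    case: (boolP (y \in Z)) => yZ; first by rewrite orbT.
    by rewrite inE => ->.
  have CS : forall v, v \in C -> v \in S by move=> v; apply: comp_in.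
  have acC : acyclic_on C (adj_in G S) -> acyclic_on (component G T x) (adj_in G T).
    move=> H [c [ac uc sc cc]]; apply: H; exists c.
    have allC : all (fun y => y \in C) c.
      apply/allP => y yc; have := (subsetP sub) y (allP ac y yc).
      rewrite in_setU; have [h1 _] := cycZ _ cc uc sc y yc.
      by rewrite (negbTE h1) orbF.
    split=> //.
    apply: (sub_in_cycle (P := mem S)) cc.
    + move=> u v uS vS; rewrite (adj_eq G ST) //.
    + by apply/allP => y /(allP allC) /CS.
  case: (goodS.2 v2 v2S) => [[l [r [H1 [H2 H3]]]] | AC]; last by right; apply: acC.
  have v2C : v2 \in C by rewrite inE connect0.
  have a12 : adj_in G S v1 v2.
    by rewrite /adj_in v1S v2S /=; apply: He; sz.
  have v1C : v1 \in C by rewrite inE; apply: connect1; rewrite adj_sym.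
  have v12 : v1 != v2 by rewrite /v1 /v2 nth_uniq //; sz.
  case: (Rtotal_order (l v2) (l v1)) => [hl|[hl|hl]].
  + left; apply: pi_restrict sub _ (pi_ext v1S v2S H1 H2 H3 hl) => //.
  + (* twins *)
    have hr : r v1 = r v2.
      have := H3 _ _ v1C v2C; have := H3 _ _ v2C v1C.
      case: (Rtotal_order (r v1) (r v2)) => [h|[h|h]] //; lra.
    have two : forall y, connect (adj_in G S) v2 y -> y = v1 \/ y = v2.
      apply: conn_ind; first by right.
      move=> u w cu hu auw.
      have uC : u \in C by rewrite inE.
      have wC : w \in C by rewrite inE; apply: connect_trans cu (connect1 auw).
      have uw : u != w by apply/eqP => e; move: auw; rewrite e /adj_in mult_loopless !andbF.
      have iu := (H2 _ _ uC wC uw).1 auw.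
      case: (eqVneq w v2) => [->|wv2]; first by right.
      have : adj_in G S w v2.
        apply/(H2 _ _ wC v2C wv2).
        by case: hu => e; rewrite e in iu; split; lra.
      move=> /and3P [wS _ m]; rewrite mult_sym in m.
      case: (Hnb _ m) => [|ew|[_ ew]].
      * by sz.
      * by left.
      * by move: wS; rewrite inS ew Zi //=; sz.
    right; move=> [[|y [|y' c]] [ac uc sc cc]] //.
    have ok : forall t, t \in [:: y, y' & c] -> t = v1.
      move=> t tc; have := (subsetP sub) t (allP ac t tc).
      have [h1 h2] := cycZ _ cc uc sc t tc.
      rewrite in_setU (negbTE h1) orbF inE => /two [] // e.
      by move: h2; rewrite e eqxx.
    have e1 := ok y (mem_head _ _).
    have e2 : y' = v1 by apply: ok; rewrite !inE eqxx orbT.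
    by move: uc; rewrite /= e1 e2 inE eqxx.
  + (* flip *)
    have hr : Rlt (r v1) (r v2).
      have := H3 _ _ v2C v1C.
      case: (Rlt_le_dec (r v1) (r v2)) => // h; lra.
    left; apply: pi_restrict sub _ (@pi_ext (fun v => Ropp (r v)) (fun v => Ropp (l v)) v1S v2S _ _ _ _) => //.
    * by move=> v vC; have := H1 _ vC; lra.
    * move=> u v uC vC uv; rewrite (H2 _ _ uC vC uv); split; case=> *; split; lra.
    * move=> u v uC vC [h1 [h2 h3]]; apply: (H3 _ _ uC vC).
      split; [lra|split; [lra|]]; case: h3 => h; [right|left]; lra.
    * lra.
-
  have noZ : forall y, connect (adj_in G T) x y -> y \notin Z.
    by move=> y c; apply/negP => yZ; apply: nz; exists y.
  have xS : x \in S by rewrite inS noZ ?connect0 // -inT.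
  have sub : forall y, connect (adj_in G T) x y -> connect (adj_in G S) x y.
    apply: conn_ind; first exact: connect0.
    move=> u w cu hu auw; apply: (connect_trans hu); apply: connect1.
    have cw := connect_trans cu (connect1 auw).
    move: auw => /and3P [uT wT m].
    by rewrite /adj_in m !inS noZ // noZ // -!inT uT wT.
  have compsub : component G T x \subset component G S x.
    by apply/subsetP => y; rewrite !inE; apply: sub.
  have inS' : forall y, y \in component G T x -> y \in S.
    move=> y yC; rewrite inS noZ -?inT; last by move: yC; rewrite inE.
    exact: comp_in yC.
  case: (goodS.2 x xS) => H; [left|right].
  + apply: pi_restrict compsub _ H => u v uC vC.
    by rewrite (adj_eq G ST) // inS'.
  + apply: ac_restrict compsub _ H => u v uC vC.
    by rewrite (adj_eq G ST) // inS'.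
Qed.

End Main.

Theorem lemma16 (V : finType) (G : multigraph V) (k : nat) (p : seq V) :
  deg2_tail G p -> 3 <= size p ->
  (pitvd_yes G [set: V] k <->
   pitvd_yes G (~: [set x in drop 2 p]) k).
Proof.
move=> Ht Hs.
have [x0 _] := Ht.
have [Hu He Hnb Hle1] := @tail_facts V G p x0 Ht Hs.
split.
- case=> X [XS cX gX]; exists (X :&: ~: [set x in drop 2 p]); split.
  + exact: subsetIr.
  + apply: leq_trans cX; apply: subset_leq_card; exact: subsetIl.
  + apply: (@hered V G ([set: V] :\: X) _ gX); apply/subsetP => y; rewrite !inE.
    by case: (y \in X); case: (y \in drop 2 p).
- case=> X [XS cX gX]; exists X; split; [exact: subsetT | exact: cX |].
  exact: (goodT Hu Hs He Hnb Hle1 XS gX).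
Qed.
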